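(* Let $c \geq 7$ be an integer, let $G$ be a graph, and let $v$ be a vertex of $G$ having a neighbor of degree $2$ or $3$. Let $Y=\{v\}\cup N_{G,1}(v)\cup N_{G,2}(v)\cup N_{G,3}(v)$. If $G$ has no PCF $c$-coloring, but $(G,Y)$ has a semi-PCF $c$-coloring, then $2d(v) - 2n_1(v) - n_2(v) - n_3(v) \geq c$.
   Context: $N_{G,d}(v)$ is the set of neighbors of $v$ of degree exactly $d$ in $G$, and $n_d(v)=|N_{G,d}(v)|$; $d(v)$ is the degree of $v$ in $G$. A PCF $c$-coloring of a graph is a proper coloring with at most $c$ colors in which every non-isolated vertex has a color appearing exactly once in its open neighborhood. For $Y\subseteq V(G)$, let $Z$ be the set of vertices of $G-Y$ having degree exactly $2$ in $G-Y$. A semi-PCF $c$-coloring of $(G,Y)$ is a proper $c$-coloring $\phi$ of $G-Y$ such that every vertex of $V(G-Y)\setminus (N_G(Y)\cap Z)$ has a color appearing exactly once (under $\phi$) among its neighbors in $G-Y$. *)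

(* Defs.v *)
(* A finite simple graph is a symmetric irreflexive relation
   e : rel T on a finType T. *)
From mathcomp Require Import all_boot.
Set Implicit Arguments. Unset Strict Implicit. Unset Printing Implicit Defensive.

Section Graph.
Variables (T : finType) (e : rel T).

Definition nbhd (v : T) : {set T} := [set u | e v u].
Definition deg (v : T) : nat := #|nbhd v|.

Definition nbhd_deg (d : nat) (v : T) : {set T} := [set u | e v u & deg u == d].
Definition n_deg (d : nat) (v : T) : nat := #|nbhd_deg d v|.

Definition has_unique_color (c : nat) (f : T -> 'I_c) (A : {set T}) : Prop :=
  exists col : 'I_c, #|[set u in A | f u == col]| = 1.

Definition is_PCF_coloring (c : nat) (f : T -> 'I_c) : Prop :=
  (forall u w, e u w -> f u != f w) /\
  (forall v, nbhd v != set0 -> has_unique_color f (nbhd v)).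

Definition nbhd_del (Y : {set T}) (x : T) : {set T} := [set u | e x u & u \notin Y].
Definition deg_del (Y : {set T}) (x : T) : nat := #|nbhd_del Y x|.

Definition Zset (Y : {set T}) : {set T} := [set x | (x \notin Y) & deg_del Y x == 2].

Definition nbhd_set (Y : {set T}) : {set T} := [set x | [exists y in Y, e x y]].

(* semi-PCF c-coloring of (G, Y): a colouring of G - Y (values of f on Y are
   irrelevant) *)
Definition is_semiPCF_coloring (c : nat) (Y : {set T}) (f : T -> 'I_c) : Prop :=
  (forall u w, u \notin Y -> w \notin Y -> e u w -> f u != f w) /\
  (forall x, x \notin Y -> x \notin (nbhd_set Y :&: Zset Y) ->
     has_unique_color f (nbhd_del Y x)).

End Graph.

(* Main.v *)
Require Import Defs.
From mathcomp Require Import all_boot zify.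
Set Implicit Arguments. Unset Strict Implicit. Unset Printing Implicit Defensive.
Lemma greedy (T : finType) (c : nat) (r : T -> nat) (F : T -> (T -> 'I_c) -> {set 'I_c})
  (g0 : T -> 'I_c) :
  injective r ->
  (forall u g, #|F u g| < c) ->
  (forall u g g', (forall w, r w < r u -> g w = g' w) -> F u g = F u g') ->
  exists g, forall u, g u \notin F u g.
Proof.
move=> rinj Fc Fdep.
have step n : exists g, forall u, r u < n -> g u \notin F u g.
  elim: n => [|n [g Hg]]; first by exists g0.
  case: (pickP (fun u => r u == n)) => [u1 /eqP ru1|none].
    have : 0 < #|~: F u1 g| by rewrite -(ltn_add2l #|F u1 g|) addn0 cardsC card_ord Fc.
    case/card_gt0P => col; rewrite inE => hcol.
    exists (fun w => if w == u1 then col else g w) => u ru.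
    have agree : forall w, r w < n -> (if w == u1 then col else g w) = g w.
      by move=> w rw; case: eqP => // ?; subst; rewrite ltnn in rw.
    case: eqP => [->|neu].
      by rewrite (Fdep u1 _ g) // ru1 => w /agree.
    have run : r u < n.
      rewrite ltnS leq_eqVlt in ru; case/orP: ru => // /eqP run.
      by case: neu; apply: rinj; rewrite run ru1.
    rewrite (Fdep u _ g) ?Hg // => w rw; apply: agree; exact: ltn_trans rw run.
  exists g => u; rewrite ltnS leq_eqVlt => /orP [/eqP run|]; last exact: Hg.
  by have := none u; rewrite run eqxx.
have [g Hg] := step (\max_u r u).+1.
by exists g => u; apply: Hg; rewrite ltnS (leq_bigmax u).
Qed.

Lemma card_bigcup_le (T I : finType) (A : {set I}) (S : I -> {set T}) :
  #|\bigcup_(i in A) S i| <= \sum_(i in A) #|S i|.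
Proof.
elim/big_rec2: _ => [|i B n _ IH]; first by rewrite cards0.
by apply: leq_trans (leq_card_setU _ _) _; rewrite leq_add2l.
Qed.
Lemma unique3 (T : finType) c (h : T -> 'I_c) (A : {set T}) a z :
  a \in A -> z \in A -> h z != h a -> #|A| <= 3 -> has_unique_color h A.
Proof.
move=> aA zA hza A3.
case: (#|[set y in A | h y == h a]| =P 1) => [H1|Hn]; first by exists (h a).
have : 1 < #|[set y in A | h y == h a]|.
  have : 0 < #|[set y in A | h y == h a]| by apply/card_gt0P; exists a; rewrite inE aA eqxx.
  by rewrite leq_eqVlt => /orP [/eqP H1|//]; case: Hn.
case/card_gt1P => y1 [y2 []]; rewrite !inE => /andP [y1A /eqP hy1] /andP [y2A /eqP hy2] ne12.
have [y [yA hy yna]] : exists y, [/\ y \in A, h y = h a & y != a].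
  case: (eqVneq y1 a) => [e1|ne1]; last by exists y1.
  by exists y2; split => //; rewrite -e1 eq_sym.
exists (h z); apply/eqP; rewrite eqn_leq; apply/andP; split; last first.
  by apply/card_gt0P; exists z; rewrite inE zA eqxx.
have sub : [set t in A | h t == h z] \subset (A :\ a) :\ y.
  apply/subsetP => t; rewrite !inE => /andP [tA /eqP ht]; rewrite tA andbT.
  apply/andP; split; apply/eqP => ?; subst t.
    by move/eqP: hza; rewrite -hy -ht.
  by move/eqP: hza; rewrite -ht.
apply: leq_trans (subset_leq_card sub) _.
move: A3; rewrite (cardsD1 a A) (cardsD1 y (A :\ a)) aA !inE yA yna /=.
by rewrite !add1n !ltnS.
Qed.
Lemma card_eqP (T : finType) (A B : {set T}) (P Q : pred T) :
  (forall t, (t \in A) && P t = (t \in B) && Q t) ->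
  #|[set t in A | P t]| = #|[set t in B | Q t]|.
Proof. by move=> h; apply: eq_card => t; rewrite !inE h. Qed.

Lemma card1_of (T : finType) (A : {set T}) (P : pred T) a :
  a \in A -> P a -> (forall t, t \in A -> P t -> t = a) -> #|[set t in A | P t]| = 1.
Proof.
move=> aA Pa h; apply/eqP/cards1P; exists a; apply/setP => t; rewrite !inE.
by apply/idP/eqP => [/andP [tA Pt]|->]; [exact: h | rewrite aA Pa].
Qed.

Section Main.
Variables (T : finType) (e : rel T) (e_sym : symmetric e) (e_irr : irreflexive e).
Variables (c : nat) (hc : 7 <= c) (v u0 : T) (hu0 : e v u0).
Variable (hu0d : (deg e u0 == 2) || (deg e u0 == 3)).
Definition Y := [set v] :|: nbhd_deg e 1 v :|: nbhd_deg e 2 v :|: nbhd_deg e 3 v.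
Variable f : T -> 'I_c.
Hypothesis hf : is_semiPCF_coloring e Y f.
Hypothesis hlt : 2 * deg e v < c + (2 * n_deg e 1 v + n_deg e 2 v + n_deg e 3 v).

Definition L := nbhd_deg e 1 v :|: nbhd_deg e 2 v :|: nbhd_deg e 3 v.

Lemma inL x : (x \in L) = e v x && [|| deg e x == 1, deg e x == 2 | deg e x == 3].
Proof. by rewrite !inE; case: (e v x) => /=; rewrite ?orbA. Qed.

Lemma inY x : (x \in Y) = (x == v) || (x \in L).
Proof. by rewrite /Y /L !inE !orbA. Qed.

Lemma vNL : v \notin L.
Proof. by rewrite inL e_irr. Qed.

Lemma L_adj x : x \in L -> e v x.
Proof. by rewrite inL => /andP []. Qed.

Lemma L_deg x : x \in L -> deg e x <= 3.
Proof. by rewrite inL => /andP [_ /or3P [] /eqP ->]. Qed.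

Lemma u0L : u0 \in L.
Proof. by rewrite inL hu0; case/orP: hu0d => ->; rewrite ?orbT. Qed.

Lemma nbhdE x y : (y \in nbhd e x) = e x y.
Proof. by rewrite inE. Qed.

Definition Hs := nbhd e v :\: L.

Lemma notY_adj x : x \notin Y -> e v x -> x \in Hs.
Proof. by rewrite inY negb_or => /andP [_ xL] vx; rewrite in_setD xL nbhdE vx. Qed.

Lemma Hs_notY x : x \in Hs -> x \notin Y.
Proof.
rewrite in_setD nbhdE inY negb_or => /andP [xL vx]; rewrite xL andbT.
by apply/eqP => xv; subst; rewrite e_irr in vx.
Qed.

Definition ucount (x : T) (col : 'I_c) := #|[set u in nbhd_del e Y x | f u == col]|.
Definition good x := [exists col, ucount x col == 1].
Definition beta x : 'I_c :=
  if [pick col | ucount x col == 1] is Some col then col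
  else if [pick u in nbhd_del e Y x] is Some u then f u else f x.

Lemma beta_good x : good x -> ucount x (beta x) = 1.
Proof.
rewrite /good /beta; case: pickP => [col /eqP //|none /existsP [col hc1]].
by have := none col; rewrite hc1.
Qed.

Lemma bad_spec x : x \notin Y -> ~~ good x ->
  x \in nbhd_set e Y /\ forall u, u \in nbhd_del e Y x -> f u = beta x.
Proof.
move=> xY ng.
have xZ : x \in nbhd_set e Y :&: Zset e Y.
  apply/negPn/negP => xnZ; have [col hcol] := hf.2 x xY xnZ.
  by move/negP: ng; apply; apply/existsP; exists col; rewrite /ucount hcol.
move: xZ; rewrite inE => /andP [xN xZ]; split => //.
move: xZ; rewrite inE => /andP [_ /eqP d2].
have nb : forall col, ucount x col != 1.
  by move=> col; apply/negP => hc1; move/negP: ng; apply; apply/existsP; exists col.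
rewrite /beta; case: pickP => [col hc1|_]; first by have := nb col; rewrite hc1.
case: pickP => [p pN|none]; last first.
  have : 0 < #|nbhd_del e Y x| by move: d2; rewrite /deg_del => ->.
  by case/card_gt0P => u uN; have := none u; rewrite uN.
move=> u uN; apply/eqP/negPn/negP => hne.
have := nb (f p); rewrite /ucount; move/negP; apply.
rewrite eqn_leq; apply/andP; split; last by apply/card_gt0P; exists p; rewrite inE pN eqxx.
have sub : [set w in nbhd_del e Y x | f w == f p] \subset nbhd_del e Y x :\ u.
  apply/subsetP => w; rewrite inE => /andP [wN /eqP hw]; rewrite in_setD1 wN andbT.
  apply/eqP => wu; subst w.
  by rewrite hw eqxx in hne.
apply: leq_trans (subset_leq_card sub) _.
by move: d2; rewrite /deg_del (cardsD1 u) uN add1n => [[->]].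
Qed.

Definition rk (u : T) : nat := if u == u0 then 0 else (enum_rank u).+1.

Lemma rk_inj : injective rk.
Proof.
move=> a b; rewrite /rk; case: eqP => [->|na]; case: eqP => [->|nb] //.
by move=> [] /val_inj /enum_rank_inj.
Qed.

Definition mins x := [set y in L | e x y].
Definition dsel x := odflt v [pick y in mins x | [forall z in mins x, rk y <= rk z]].

Lemma dsel_spec x y : y \in mins x -> dsel x \in mins x /\ rk (dsel x) <= rk y.
Proof.
move=> ym; rewrite /dsel; case: pickP => [d /andP [dm /forall_inP hd]|none] /=.
  by split => //; apply: hd.
case: (arg_minnP rk ym) => d dm hd.
have dm' : d \in mins x := dm.
have := none d => /= /negbT; rewrite negb_and dm' /= => /negP; case.
by apply/forall_inP => z zm; apply: hd.
Qed.

Definition strat1 := [exists w in Hs, #|[set w' in Hs | f w' == f w]| == 1].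
Definition eta : 'I_c :=
  if [pick w in Hs | #|[set w' in Hs | f w' == f w]| == 1] is Some w then f w else f v.

Lemma eta_spec : strat1 -> #|[set w' in Hs | f w' == eta]| = 1.
Proof.
rewrite /strat1 /eta; case: pickP => [w /andP [_ /eqP //]|none /existsP [w /andP [wH h1]]].
by have := none w; rewrite wH h1.
Qed.

Lemma strat2_card : ~~ strat1 -> #|Hs| <= 3 -> #|f @: Hs| <= 1.
Proof.
move=> ns H3; rewrite leqNgt; apply/negP => /card_gt1P [a [b [aI bI ab]]].
move/imsetP: aI => [wa waH ea]; move/imsetP: bI => [wb wbH eb]; subst a b.
have nu : forall w, w \in Hs -> 1 < #|[set w' in Hs | f w' == f w]|.
  move=> w wH; have : 0 < #|[set w' in Hs | f w' == f w]|.
    by apply/card_gt0P; exists w; rewrite inE wH eqxx.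
  rewrite leq_eqVlt => /orP [/eqP h1|//]; move/negP: ns; case.
  by apply/exists_inP; exists w => //; rewrite -h1.
have dis : [disjoint [set w' in Hs | f w' == f wa] & [set w' in Hs | f w' == f wb]].
  rewrite disjoints_subset; apply/subsetP => t; rewrite !inE => /andP [_ /eqP ft].
  by apply/negP => /andP [_ /eqP fb]; rewrite -ft fb eqxx in ab.
have := leq_card_setU [set w' in Hs | f w' == f wa] [set w' in Hs | f w' == f wb].
move/leqifP; rewrite dis => /eqP hU.
have : #|[set w' in Hs | f w' == f wa] :|: [set w' in Hs | f w' == f wb]| <= #|Hs|.
  by apply: subset_leq_card; apply/subsetP => t; rewrite !inE => /orP [] /andP [-> _].
rewrite hU; have := nu _ waH; have := nu _ wbH; lia.
Qed.

Lemma nd_card k : n_deg e k v = \sum_(w in nbhd e v) (deg e w == k).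
Proof.
rewrite /n_deg /nbhd_deg -sum1dep_card big_mkcondr /=.
by apply: eq_big => [w|w _]; rewrite ?inE //; case: (_ == k).
Qed.

Definition cost w := if deg e w == 1 then 0 else if (deg e w == 2) || (deg e w == 3) then 1 else 2.

Lemma sum_cost : \sum_(w in nbhd e v) cost w + (2 * n_deg e 1 v + n_deg e 2 v + n_deg e 3 v)
  = 2 * deg e v.
Proof.
have E : forall w, cost w + ((deg e w == 1) + (deg e w == 1)) + (deg e w == 2) + (deg e w == 3) = 2.
  by move=> w; rewrite /cost; case: eqP => [->|]//; case: eqP => [->|]//; case: eqP => [->|].
have s1 : \sum_(w in nbhd e v) (cost w + ((deg e w == 1) + (deg e w == 1)) + (deg e w == 2) + (deg e w == 3))
   = \sum_(w in nbhd e v) 2 by apply: eq_bigr => w _; rewrite E.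
rewrite sum_nat_const in s1.
have s2 : \sum_(w in nbhd e v) (cost w + ((deg e w == 1) + (deg e w == 1)) + (deg e w == 2) + (deg e w == 3))
  = \sum_(w in nbhd e v) cost w + (\sum_(w in nbhd e v) (deg e w == 1) + \sum_(w in nbhd e v) (deg e w == 1))
    + \sum_(w in nbhd e v) (deg e w == 2) + \sum_(w in nbhd e v) (deg e w == 3).
  by rewrite !big_split.
have dv : deg e v = #|nbhd e v| by [].
rewrite !nd_card dv; lia.
Qed.

Definition Fv w : {set 'I_c} :=
  if w \in L then
    (if [pick z in nbhd e w :\ v] is Some z then (if z \in L then set0 else [set f z]) else set0)
  else [set f w; beta w].

Lemma v_in_nbhd w : w \in L -> v \in nbhd e w.
Proof. by move/L_adj; rewrite nbhdE e_sym. Qed.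

Lemma deg1_empty w : w \in L -> deg e w = 1 -> nbhd e w :\ v = set0.
Proof.
move=> wL d1; apply/eqP; rewrite -cards_eq0.
by move: d1; rewrite /deg (cardsD1 v) v_in_nbhd // add1n => [[->]].
Qed.

Lemma Fv_card w : w \in nbhd e v -> #|Fv w| <= cost w.
Proof.
move=> wN; rewrite /Fv /cost; case: ifP => wL.
  case: eqP => [d1|nd1].
    rewrite deg1_empty //; case: pickP => [z|_]; first by rewrite inE.
    by rewrite cards0.
  move: wL; rewrite inL => /andP [_]; case/or3P => [/eqP d1 //|->|->] /=;
  case: pickP => [z _|_]; rewrite ?orbT /= ?cards0 //; case: ifP => _; by rewrite ?cards0 ?cards1.
have ev : e v w by rewrite -nbhdE. move: wL; rewrite inL ev /= => /negbT; rewrite !negb_or => /and3P [/negbTE -> /negbTE -> /negbTE ->].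
by rewrite cards2; case: (_ != _).
Qed.

Definition Forbv := \bigcup_(w in nbhd e v) Fv w.

Lemma Forbv_card : #|Forbv| < c.
Proof.
have h1 := card_bigcup_le (nbhd e v) Fv.
have h2 : \sum_(w in nbhd e v) #|Fv w| <= \sum_(w in nbhd e v) cost w.
  by apply: leq_sum => w; apply: Fv_card.
have := sum_cost; have := hlt; rewrite /Forbv; lia.
Qed.

Definition alpha : 'I_c := odflt (f v) [pick col in ~: Forbv].

Lemma alpha_spec : alpha \notin Forbv.
Proof.
rewrite /alpha; case: pickP => [col|none]; first by rewrite inE.
have : 0 < #|~: Forbv|.
  by have := cardsC Forbv; rewrite card_ord; have := Forbv_card; lia.
by case/card_gt0P => col hcol; have := none col; rewrite hcol.
Qed.

Lemma alpha_H w : w \in Hs -> (alpha != f w) && (alpha != beta w).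
Proof.
move=> wH; have := alpha_spec; rewrite /Forbv; apply: contraNT; rewrite negb_and !negbK.
move=> hh; apply/bigcupP; exists w; first by move: wH; rewrite in_setD => /andP [].
move: wH; rewrite in_setD => /andP [/negbTE wL _]; rewrite /Fv wL !inE.
by case/orP: hh => /eqP ->; rewrite eqxx ?orbT.
Qed.

Lemma alpha_L w z : w \in L -> [pick z in nbhd e w :\ v] = Some z -> z \notin L ->
  alpha != f z.
Proof.
move=> wL hp zL; have := alpha_spec; rewrite /Forbv; apply: contraNN => /eqP ha.
apply/bigcupP; exists w; first by rewrite nbhdE L_adj.
by rewrite /Fv wL hp (negbTE zL) inE ha.
Qed.

Lemma Hs_bound : 2 * #|Hs| + 1 < c.
Proof.
have h : 2 * #|Hs| + 1 <= \sum_(w in nbhd e v) cost w.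
  rewrite (bigID (fun w => w \in L)) /= addnC leq_add //.
    rewrite (bigD1 u0) /=; last by rewrite nbhdE hu0 u0L.
    have -> : cost u0 = 1.
      by rewrite /cost; case/orP: hu0d => /eqP ->.
    exact: leq_addr.
  rewrite mulnC -sum_nat_const; apply: eq_leq; apply: eq_big => [w|w].
    by rewrite in_setD andbC.
  rewrite in_setD => /andP [wL wN]; rewrite /cost.
  have ev : e v w by rewrite -nbhdE.
  by move: wL; rewrite inL ev /= !negb_or => /and3P [/negbTE -> /negbTE -> /negbTE ->].
have := sum_cost; have := hlt; lia.
Qed.

Definition cond u x := [|| good x, e v x | u == dsel x].
Definition Fw (g : T -> 'I_c) u x : {set 'I_c} :=
  if x \in L then (if rk x < rk u then [set g x] else set0)
  else [set f x; if cond u x then beta x else g (dsel x)].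
Definition Ex (g : T -> 'I_c) u : {set 'I_c} :=
  if strat1 then [set eta] else if u == u0 then f @: Hs else [set g u0].
Definition F u (g : T -> 'I_c) : {set 'I_c} :=
  if u \in L then alpha |: (Ex g u :|: \bigcup_(x in nbhd e u :\ v) Fw g u x) else set0.

Lemma Ex_card g u : #|Ex g u| + 5 < c.
Proof.
rewrite /Ex; case: ifP => s1; first by rewrite cards1.
case: ifP => _; last by rewrite cards1.
case: (leqP #|Hs| 3) => h3.
  have := strat2_card (negbT s1) h3; set k := #|_|; move=> hk; have := hc; lia.
have := leq_imset_card f Hs; have := Hs_bound; move: h3; set k := #|Hs|; set k2 := #|_ @: _|; lia.
Qed.

Lemma F_card u g : #|F u g| < c.
Proof.
rewrite /F; case: ifP => uL; last by rewrite cards0; lia.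
have h1 := card_bigcup_le (nbhd e u :\ v) (Fw g u).
have h2 : \sum_(x in nbhd e u :\ v) #|Fw g u x| <= \sum_(x in nbhd e u :\ v) 2.
  apply: leq_sum => x _; rewrite /Fw; case: ifP => _; first by case: ifP; rewrite ?cards1 ?cards0.
  by rewrite cards2; case: (_ != _).
rewrite sum_nat_const in h2.
have h3 : #|nbhd e u :\ v| <= 2.
  by have := L_deg uL; rewrite /deg (cardsD1 v) v_in_nbhd.
have h4 := leq_card_setU (Ex g u) (\bigcup_(x in nbhd e u :\ v) Fw g u x).
move/leqifP: h4; case: ifP => _ => [/eqP|] h4;
rewrite cardsU1; have := Ex_card g u; lia.
Qed.

Lemma rk_u0 u : u != u0 -> rk u0 < rk u.
Proof. by move=> nu; rewrite /rk eqxx (negbTE nu). Qed.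

Lemma F_dep u g g' : (forall w, rk w < rk u -> g w = g' w) -> F u g = F u g'.
Proof.
move=> ag; rewrite /F; case: ifP => uL //.
congr (_ |: (_ :|: _)).
  rewrite /Ex; case: ifP => // _; case: eqP => // /eqP nu.
  by rewrite ag // rk_u0.
apply: eq_bigr => x; rewrite in_setD1 => /andP [xv xN]; rewrite /Fw; case: ifP => xL.
  by case: ifP => // /ag ->.
case: ifP => cd //; rewrite ag //.
have um : u \in mins x by rewrite inE uL e_sym -nbhdE.
have [dm dle] := dsel_spec um.
rewrite ltn_neqAle dle andbT; apply/negP => /eqP /rk_inj du.
by move: cd; rewrite /cond du eqxx !orbT.
Qed.

Lemma exists_g : exists g : T -> 'I_c, forall u, g u \notin F u g.
Proof. exact: (greedy (fun _ => f v) rk_inj F_card F_dep). Qed.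

Section Color.
Variable g : T -> 'I_c.
Hypothesis hg : forall u, g u \notin F u g.

Definition hcol x := if x == v then alpha else if x \in L then g x else f x.

Lemma hcol_v : hcol v = alpha.
Proof. by rewrite /hcol eqxx. Qed.

Lemma hcol_L u : u \in L -> hcol u = g u.
Proof.
move=> uL; rewrite /hcol uL; case: eqP => // uv; subst u.
by rewrite (negbTE vNL) in uL.
Qed.

Lemma hcol_out x : x \notin Y -> hcol x = f x.
Proof. by rewrite inY negb_or /hcol => /andP [/negbTE -> /negbTE ->]. Qed.

Lemma G1 u : u \in L -> g u != alpha.
Proof. by move=> uL; have := hg u; rewrite /F uL in_setU1 negb_or => /andP []. Qed.

Lemma GE u : u \in L -> g u \notin Ex g u.
Proof. by move=> uL; have := hg u; rewrite /F uL in_setU1 in_setU !negb_or => /and3P []. Qed.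

Lemma GW u x : u \in L -> e u x -> x != v -> g u \notin Fw g u x.
Proof.
move=> uL ux xv; have := hg u; rewrite /F uL in_setU1 in_setU !negb_or => /and3P [_ _].
apply: contra => hx; apply/bigcupP; exists x => //.
by rewrite in_setD1 xv nbhdE.
Qed.

Lemma G3 u x : u \in L -> x \in L -> e u x -> rk x < rk u -> g u != g x.
Proof.
move=> uL xL ux lt; have xv : x != v by apply: contraNneq vNL => <-.
by have := GW uL ux xv; rewrite /Fw xL lt inE.
Qed.

Lemma notY_ne x : x \notin Y -> (x != v) && (x \notin L).
Proof. by rewrite inY negb_or. Qed.

Lemma G4 u x : u \in L -> e u x -> x \notin Y ->
  (g u != f x) && (g u != (if cond u x then beta x else g (dsel x))).
Proof.
move=> uL ux /notY_ne /andP [xv xL].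
by have := GW uL ux xv; rewrite /Fw (negbTE xL) !inE negb_or.
Qed.

Lemma prop_v b : e v b -> hcol v != hcol b.
Proof.
move=> vb; rewrite hcol_v; case: (boolP (b \in L)) => bL.
  by rewrite hcol_L // eq_sym G1.
have bY : b \notin Y.
  rewrite inY negb_or bL andbT; apply: contraTneq vb => ->; by rewrite e_irr.
by rewrite hcol_out //; case/andP: (alpha_H (notY_adj bY vb)).
Qed.

Lemma prop_L a b : a \in L -> e a b -> b != v -> (b \in L -> rk b < rk a) ->
  hcol a != hcol b.
Proof.
move=> aL ab bv hr; rewrite hcol_L //; case: (boolP (b \in L)) => bL.
  by rewrite hcol_L // G3 // hr.
have bY : b \notin Y by rewrite inY negb_or bv.
by rewrite hcol_out //; case/andP: (G4 aL ab bY).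
Qed.

Lemma proper_h a b : e a b -> hcol a != hcol b.
Proof.
move=> ab; have ba : e b a by rewrite e_sym.
have anb : a != b by apply: contraTneq ab => ->; rewrite e_irr.
case: (eqVneq a v) => [av|av]; first by subst a; apply: prop_v.
case: (eqVneq b v) => [bv|bv]; first by subst b; rewrite eq_sym; apply: prop_v.
case: (boolP (a \in L)) => aL.
  case: (boolP (b \in L)) => bL.
    case: (ltngtP (rk a) (rk b)) => [lt|lt|eq].
    - by rewrite eq_sym; apply: prop_L => // _.
    - by apply: prop_L => // _.
    - by move/rk_inj: eq anb => ->; rewrite eqxx.
  by apply: prop_L => //; rewrite (negbTE bL).
have aY : a \notin Y by rewrite inY negb_or av.
case: (boolP (b \in L)) => bL.
  by rewrite eq_sym; apply: prop_L => //; rewrite (negbTE aL).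
have bY : b \notin Y by rewrite inY negb_or bv.
by rewrite !hcol_out //; apply: hf.1.
Qed.

Lemma in_nbhd_del x t : (t \in nbhd_del e Y x) = e x t && (t \notin Y).
Proof. by rewrite /nbhd_del in_set. Qed.

Lemma uniq_v : has_unique_color hcol (nbhd e v).
Proof.
case: (boolP strat1) => s1.
  exists eta; rewrite -(eta_spec s1); apply: card_eqP => t.
  case: (boolP (t \in L)) => tL.
    rewrite hcol_L // /Hs in_setD tL /=.
    by have := GE tL; rewrite /Ex s1 inE => /negbTE ->; rewrite andbF.
  rewrite /Hs in_setD tL /=; case: (boolP (t \in nbhd e v)) => //= tN.
  have tY : t \notin Y.
    rewrite inY negb_or tL andbT; apply: contraTneq tN => ->; by rewrite nbhdE e_irr.
  by rewrite hcol_out.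
exists (g u0); apply: (card1_of (a := u0)); first by rewrite nbhdE.
  by rewrite /= hcol_L ?u0L.
move=> t tN /= /eqP ht; case: (boolP (t \in L)) => tL.
  apply/eqP; apply: contraTT (GE tL) => tu; rewrite /Ex (negbTE s1) (negbTE tu) inE negbK.
  by rewrite -(hcol_L tL) ht.
have tY : t \notin Y.
  rewrite inY negb_or tL andbT; apply: contraTneq tN => ->; by rewrite nbhdE e_irr.
have := GE u0L; rewrite /Ex (negbTE s1) eqxx -ht hcol_out //.
by rewrite (imset_f f (notY_adj tY _)) // -nbhdE.
Qed.

Lemma uniq_L u : u \in L -> has_unique_color hcol (nbhd e u).
Proof.
move=> uL; case hp: [pick z in nbhd e u :\ v] => [z|].
  have zin : z \in nbhd e u :\ v by move: hp; case: pickP => // z' hz [<-].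
  move: (zin); rewrite in_setD1 => /andP [zv zN].
  apply: (unique3 (a := v) (z := z)) => //; first exact: v_in_nbhd.
    rewrite hcol_v; case: (boolP (z \in L)) => zL; first by rewrite hcol_L // G1.
    have zY : z \notin Y by rewrite inY negb_or zv.
    by rewrite hcol_out // eq_sym; apply: (alpha_L uL hp zL).
  exact: L_deg.
have none : forall t, t \in nbhd e u -> t = v.
  move=> t tN; move: hp; case: pickP => // nn _; apply/eqP; apply: contraFT (nn t) => tv.
  by rewrite in_setD1 tv.
exists alpha; apply: (card1_of (a := v)); first exact: v_in_nbhd.
  by rewrite /= hcol_v.
by move=> t /none.
Qed.

Lemma uniq_out x : x \notin Y -> has_unique_color hcol (nbhd e x).
Proof.
move=> xY; case: (boolP (good x)) => gx.
  exists (beta x); rewrite -(beta_good gx) /ucount; apply: card_eqP => t.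
  rewrite in_nbhd_del nbhdE; case: (boolP (e x t)) => //= xt.
  case: (boolP (t \in Y)) => tY /=; last by rewrite hcol_out.
  apply/negbTE; move: tY; rewrite inY => /orP [/eqP tv|tL].
    subst t; rewrite hcol_v.
    have vx : e v x by rewrite e_sym.
    by case/andP: (alpha_H (notY_adj xY vx)).
  rewrite hcol_L //; have := G4 tL _ xY; rewrite e_sym xt => /(_ isT) /andP [_].
  by rewrite /cond gx.
have [xN hb] := bad_spec xY gx.
case: (boolP (e v x)) => vx.
  exists alpha; apply: (card1_of (a := v)); first by rewrite nbhdE e_sym.
    by rewrite /= hcol_v.
  move=> t tN /= /eqP ht; case: (eqVneq t v) => // tv.
  case: (boolP (t \in L)) => tL; first by move: ht; rewrite hcol_L // => /eqP; rewrite (negbTE (G1 tL)).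
  have tY : t \notin Y by rewrite inY negb_or tv.
  move: ht; rewrite hcol_out // hb; last by rewrite in_nbhd_del -nbhdE tN.
  by case/andP: (alpha_H (notY_adj xY vx)) => _ /eqP hh /esym.
move: xN; rewrite inE => /exists_inP [y yY xy].
have yL : y \in L.
  move: yY; rewrite inY => /orP [/eqP yv|//]; subst y.
  by rewrite e_sym xy in vx.
have ym : y \in mins x by rewrite inE yL.
have [dm _] := dsel_spec ym.
move: (dm); rewrite inE => /andP [dL xd].
exists (g (dsel x)); apply: (card1_of (a := dsel x)); first by rewrite nbhdE.
  by rewrite /= hcol_L.
move=> t tN /= /eqP ht.
have xt : e x t by rewrite -nbhdE.
case: (eqVneq t v) => [tv|tv]; first by subst t; rewrite e_sym xt in vx.
case: (boolP (t \in L)) => tL.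
  apply/eqP; apply: contraTT isT => td.
  have := G4 tL _ xY; rewrite e_sym xt => /(_ isT) /andP [_].
  by rewrite /cond (negbTE gx) (negbTE vx) (negbTE td) /= -ht hcol_L // eqxx.
have tY : t \notin Y by rewrite inY negb_or tv.
move: ht; rewrite hcol_out // hb; last by rewrite in_nbhd_del xt.
have := G4 dL _ xY; rewrite e_sym xd => /(_ isT) /andP [_].
by rewrite /cond eqxx !orbT => /eqP hh /esym.
Qed.
End Color.

Lemma PCF_exists : exists h : T -> 'I_c, is_PCF_coloring e h.
Proof.
have [g hg] := exists_g.
exists (hcol g); split; first exact: proper_h.
move=> y _; case: (eqVneq y v) => [->|yv]; first exact: uniq_v.
case: (boolP (y \in L)) => yL; first exact: uniq_L.
have yY : y \notin Y by rewrite inY negb_or yv.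
exact: (uniq_out hg yY).
Qed.
End Main.

Theorem mainTheorem7 (T : finType) (e : rel T)
  (e_sym : symmetric e) (e_irr : irreflexive e)
  (c : nat) (hc : 7 <= c) (v : T)
  (hv : exists u, e v u && ((deg e u == 2) || (deg e u == 3))) :
  let Y := [set v] :|: nbhd_deg e 1 v :|: nbhd_deg e 2 v :|: nbhd_deg e 3 v in
  ~ (exists f : T -> 'I_c, is_PCF_coloring e f) ->
  (exists f : T -> 'I_c, is_semiPCF_coloring e Y f) ->
  c + (2 * n_deg e 1 v + n_deg e 2 v + n_deg e 3 v) <= 2 * deg e v.
Proof.
move=> Yl nopcf [f hf]; case: hv => u0 /andP [hu0 hu0d].
rewrite leqNgt; apply/negP => hlt; apply: nopcf.
exact: (PCF_exists e_sym e_irr hc hu0 hu0d hf hlt).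
Qed.
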